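(* Let $M\in\mathrm{M}_n(\mathbb{K})$ with minimal polynomial $\mu_M=f_1^{m_1}\cdots f_s^{m_s}$ and characteristic polynomial $\chi_M=f_1^{n_1}\cdots f_s^{n_s}$, where $f_1,\dots,f_s\in\mathbb{K}[x]$ are pairwise distinct monic irreducible polynomials and $m_i,n_i\ge1$. For $i\in\{1,\dots,s\}$ let $d_i=\dim_{\mathbb{K}}\ker(f_i^{m_i}(M))$ (which equals $n_i\deg f_i$) and let $P_i\in\mathrm{M}_{d_i\times n}(\mathbb{K})$ be a matrix whose rows form a $\mathbb{K}$-basis of $\ker(f_i^{m_i}(M))\subseteq\mathbb{K}^n$. Let $\mathcal{C}$ be an $M$-code with parameters $[n,k]$, $k\ge1$; let $k_i=\dim_{\mathbb{L}}(\mathcal{C}\cap\ker(f_i^{m_i}(M)))$ (kernel taken in $\mathbb{L}^n$), $\mathcal{C}_i=\{c\in\mathbb{L}^{d_i} : cP_i\in\mathcal{C}\cap\ker(f_i^{m_i}(M))\}$, and $\Lambda=\{i : \mathcal{C}\cap\ker(f_i^{m_i}(M))\neq\{0\}\}$. Then for all $r\in\{1,\dots,k\}$, $$M_r(\mathcal{C})=\min_{\substack{\sum_{i\in\Lambda}r_i=r\\ r_i\in\{0,\dots,k_i\}}}\sum_{i\in\Lambda}M_{r_i}(\mathcal{C}_i)=\min_{\substack{\sum_{i\in\Lambda}r_i=r\\ r_i\in\{0,\dots,k_i\}}}\sum_{i\in\Lambda}M_{r_i}(\mathcal{C}\cap\ker(f_i^{m_i}(M))),$$ for all $i\in\Lambda$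 and $r_i\in\{1,\dots,k_i\}$ we have $M_{r_i}(\mathcal{C}_i)=M_{r_i}(\mathcal{C}\cap\ker(f_i^{m_i}(M)))\le n_i\deg(f_i)-k_i+r_i$, and for all $r\in\{1,\dots,k\}$, $$M_r(\mathcal{C})\le\min_{\substack{\sum_{i\in\Lambda}r_i=r\\ r_i\in\{0,\dots,k_i\}}}\Big(\sum_{i\in\Lambda,\ r_i\ne0}(n_i\deg(f_i)-k_i)\Big)+r.$$ In particular $M_1(\mathcal{C})=\min_{i\in\Lambda}M_1(\mathcal{C}_i)\le\min_{i\in\Lambda}(n_i\deg(f_i)-k_i)+1$ and $M_k(\mathcal{C})=\sum_{i\in\Lambda}M_{k_i}(\mathcal{C}_i)\le\sum_{i\in\Lambda}n_i\deg(f_i)$.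
   Context: Let $\mathbb{L}/\mathbb{K}$ be a field extension of finite degree $m$, and $n\ge 1$ an integer with $m\ge n$ (standing assumption). Vectors are row vectors; for a matrix $A$ with entries in $\mathbb{K}$, $\ker(A)$ denotes $\{c : cA^t=0\}$ in $\mathbb{K}^n$ or in $\mathbb{L}^n$ as indicated. Fix a $\mathbb{K}$-basis $\mathcal{B}$ of $\mathbb{L}$; for $c=(c_1,\dots,c_n)\in\mathbb{L}^n$ let $M_{\mathcal{B}}(c)\in\mathrm{M}_{m\times n}(\mathbb{K})$ be the matrix whose $j$-th column is the coordinate vector of $c_j$ in $\mathcal{B}$. The rank support $\mathrm{Rsupp}(c)\subseteq\mathbb{K}^n$ is the $\mathbb{K}$-row space of $M_{\mathcal{B}}(c)$, and $\mathrm{wt}_R(c)=\dim_{\mathbb{K}}\mathrm{Rsupp}(c)$. For an $\mathbb{L}$-subspace $\mathcal{D}\subseteq\mathbb{L}^n$, $\mathrm{Rsupp}(\mathcal{D})$ is the $\mathbb{K}$-span of all $\mathrm{Rsupp}(d)$, $d\in\mathcal{D}$, and $\mathrm{wt}_R(\mathcal{D})=\dim_{\mathbb{K}}\mathrm{Rsupp}(\mathcal{D})$. A linear $[n,k]$ code is a $k$-dimensional $\mathbb{L}$-subspace $\mathcal{C}\subseteq\mathbb{L}^n$; for $1\le r\le k$, $M_r(\mathcal{C})=\min\{\mathrm{wt}_R(\mathcal{D}) : \mathcal{D}\subseteq\mathcal{C},\ \dim_{\mathbb{L}}\mathcal{D}=r\}$, and $M_0(\mathcal{C})=0$ by convention.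 For $M\in\mathrm{M}_n(\mathbb{K})$, a linear code $\mathcal{C}\subseteq\mathbb{L}^n$ is an $M$-code if $cM^t\in\mathcal{C}$ for all $c\in\mathcal{C}$. *)

(* Defs.v *)
From HB Require Import structures.
From mathcomp Require Import all_boot all_order all_algebra all_field.
From mathcomp Require Import boolp.
Set Implicit Arguments. Unset Strict Implicit. Unset Printing Implicit Defensive.
Import GRing.Theory.
Local Open Scope ring_scope.

(* least natural number satisfying a (classical) predicate; 0 if none *)
Lemma pmin_ex (P : nat -> Prop) : (exists n, P n) -> exists n, `[< P n >].
Proof. by case=> n Pn; exists n; apply/asboolP. Qed.

Definition pmin (P : nat -> Prop) : nat :=
  match pselect (exists n, P n) with
  | left H => ex_minn (pmin_ex H)
  | right _ => 0%N
  end.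

Section RankMetric.
Variables (K : fieldType) (L : fieldExtType K).

Definition basisB := vbasis (fullv : {vspace L}).

Definition MB n (c : 'rV[L]_n) : 'M[K]_(\dim (fullv : {vspace L}), n) :=
  \matrix_(l, j) coord basisB l (c 0 j).

(* Rsupp(c) is the K-row space of MB c; wt_R(D) = dim_K of the K-span of all
   Rsupp(d), d in D (the row space of D), i.e. the least dimension of a
   K-subspace of K^n containing every Rsupp(d), d in D. *)
Definition wtR p n (D : 'M[L]_(p, n)) : nat :=
  pmin (fun w => exists V : 'M[K]_n,
          \rank V = w /\ forall d : 'rV[L]_n, (d <= D)%MS -> (MB d <= V)%MS).

Definition Mr p n (C : 'M[L]_(p, n)) (r : nat) : nat :=
  pmin (fun w => exists D : 'M[L]_n,
          [/\ \rank D = r, (D <= C)%MS & wtR D = w]).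

Definition liftL p n (A : 'M[K]_(p, n)) : 'M[L]_(p, n) := map_mx (in_alg L) A.

Definition kerK n (A : 'M[K]_n) : 'M[K]_n := kermx A^T.
Definition kerL n (A : 'M[K]_n) : 'M[L]_n := kermx (liftL A)^T.

Definition is_Mcode n (M : 'M[K]_n) p (C : 'M[L]_(p, n)) : Prop :=
  forall c : 'rV[L]_n, (c <= C)%MS -> (c *m (liftL M)^T <= C)%MS.

Definition minsplit s (Lam : {set 'I_s}) (k : 'I_s -> nat) (r : nat)
    (F : 'I_s -> nat -> nat) : nat :=
  pmin (fun w => exists rr : 'I_s -> nat,
          [/\ forall i, i \in Lam -> (rr i <= k i)%N,
              (\sum_(i in Lam) rr i)%N = r &
              w = (\sum_(i in Lam) F i (rr i))%N]).

Definition minidx s (Lam : {set 'I_s}) (F : 'I_s -> nat) : nat :=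
  pmin (fun w => exists2 i, i \in Lam & w = F i).

End RankMetric.

(* Main.v *)
Require Import Defs.
From HB Require Import structures.
From mathcomp Require Import all_boot all_order all_algebra all_field.
From mathcomp Require Import boolp zify.
Set Implicit Arguments. Unset Strict Implicit. Unset Printing Implicit Defensive.
Import GRing.Theory.
Local Open Scope ring_scope.


Lemma pminP (P : nat -> Prop) : (exists n, P n) ->
  P (pmin P) /\ forall m, P m -> (pmin P <= m)%N.
Proof.
move=> ex; rewrite /pmin; case: pselect => [H|//].
case: ex_minnP => m /asboolP Pm mmin; split=> // k Pk; apply: mmin.
exact/asboolP.
Qed.

Lemma pmin_le (P : nat -> Prop) m : P m -> (pmin P <= m)%N.
Proof. by move=> Pm; apply: (pminP (ex_intro _ m Pm)).2. Qed.

Lemma pmin_spec (P : nat -> Prop) : (exists n, P n) -> P (pmin P).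
Proof. by move=> /pminP []. Qed.

Lemma pmin_ext (P Q : nat -> Prop) : (forall w, P w <-> Q w) -> pmin P = pmin Q.
Proof. by move=> PQ; have -> : P = Q by apply: funext => w; apply: propext. Qed.

Section RS.
Variables (K : fieldType) (L : fieldExtType K).
Local Notation dL := (\dim (fullv : {vspace L})).

Lemma MB_add n (c1 c2 : 'rV[L]_n) : MB (c1 + c2) = MB c1 + MB c2.
Proof. by apply/matrixP => l j; rewrite !mxE linearD. Qed.

Lemma MB0 n : MB (0 : 'rV[L]_n) = 0.
Proof. by apply/matrixP => l j; rewrite !mxE linear0. Qed.

Lemma MB_sum n (I : finType) (F : I -> 'rV[L]_n) :
  MB (\sum_i F i) = \sum_i MB (F i).
Proof. exact: (big_morph _ (@MB_add n) (@MB0 n)). Qed.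

Definition Tm (a : L) : 'M[K]_dL :=
  \matrix_(l, m) coord (basisB L) l (a * (basisB L)`_m).

Lemma MB_scale n (a : L) (c : 'rV[L]_n) : MB (a *: c) = Tm a *m MB c.
Proof.
apply/matrixP => l j; rewrite !mxE.
rewrite {1}(coord_vbasis (memvf (c 0 j))) mulr_sumr linear_sum.
apply: eq_bigr => m _; rewrite !mxE -scalerAr linearZ /= mulrC.
by [].
Qed.

Lemma MB_mul a b (c : 'rV[L]_a) (X : 'M[K]_(a, b)) :
  MB (c *m liftL L X) = MB c *m X.
Proof.
apply/matrixP => l j; rewrite !mxE linear_sum; apply: eq_bigr => t _.
by rewrite !mxE /= mulr_algr linearZ /= mulrC.
Qed.

Definition Rs p n (D : 'M[L]_(p, n)) : 'M[K]_n := (\sum_(i < p) <<MB (row i D)>>)%MS.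

Lemma Rs_row p n (D : 'M[L]_(p, n)) i : (MB (row i D) <= Rs D)%MS.
Proof. by rewrite -(genmxE (MB (row i D))); apply: (sumsmx_sup i). Qed.

Lemma Rs_min p n (D : 'M[L]_(p, n)) m (V : 'M[K]_(m, n)) :
  (forall i, MB (row i D) <= V)%MS -> (Rs D <= V)%MS.
Proof. by move=> H; apply/sumsmx_subP => i _; rewrite genmxE. Qed.

Lemma Rs_cover p n (D : 'M[L]_(p, n)) (d : 'rV[L]_n) :
  (d <= D)%MS -> (MB d <= Rs D)%MS.
Proof.
move/submxP => [x ->]; rewrite mulmx_sum_row MB_sum.
apply: summx_sub => i _; rewrite MB_scale; apply: submx_trans (Rs_row _ _).
exact: submxMl.
Qed.

Lemma wtR_Rs p n (D : 'M[L]_(p, n)) : wtR D = \rank (Rs D).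
Proof.
apply/eqP; rewrite eqn_leq; apply/andP; split.
  apply: pmin_le; exists (Rs D); split=> // d; exact: Rs_cover.
have ex : exists w, exists V : 'M[K]_n, \rank V = w /\
    forall d : 'rV[L]_n, (d <= D)%MS -> (MB d <= V)%MS.
  by exists n, 1%:M; split; [exact: mxrank1 | move=> d _; exact: submx1].
rewrite /wtR; have [[V [<- HV]] _] := pminP ex.
apply: mxrankS; apply: Rs_min => i; apply: HV; exact: row_sub.
Qed.

Lemma Rs_mono p1 p2 n (D1 : 'M[L]_(p1, n)) (D2 : 'M[L]_(p2, n)) :
  (D1 <= D2)%MS -> (Rs D1 <= Rs D2)%MS.
Proof.
move=> H; apply: Rs_min => i; apply: Rs_cover; exact: submx_trans (row_sub _ _) H.
Qed.

Lemma Rs_eqmx p1 p2 n (D1 : 'M[L]_(p1, n)) (D2 : 'M[L]_(p2, n)) :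
  (D1 :=: D2)%MS -> (Rs D1 :=: Rs D2)%MS.
Proof. by move=> e; apply/eqmxP; rewrite !Rs_mono ?e. Qed.

Lemma wtR_eqmx p1 p2 n (D1 : 'M[L]_(p1, n)) (D2 : 'M[L]_(p2, n)) :
  (D1 :=: D2)%MS -> wtR D1 = wtR D2.
Proof. by move=> e; rewrite !wtR_Rs (Rs_eqmx e). Qed.

Lemma Rs_mul p a b (D : 'M[L]_(p, a)) (X : 'M[K]_(a, b)) :
  (Rs (D *m liftL L X) :=: Rs D *m X)%MS.
Proof.
apply/eqmxP/andP; split.
  apply: Rs_min => i; rewrite row_mul MB_mul; apply: submxMr; exact: Rs_row.
rewrite /Rs sumsmxMr_gen; apply/sumsmx_subP => i _.
rewrite genmxE (eqmxMr _ (genmxE _)) -MB_mul -row_mul; exact: Rs_row.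
Qed.

Lemma Rs_sub_lift p n m (D : 'M[L]_(p, n)) (S : 'M[K]_(m, n)) :
  (D <= liftL L S)%MS -> (Rs D <= S)%MS.
Proof.
move=> H; apply: Rs_min => i.
have /submxP [y ->] := submx_trans (row_sub i D) H.
by rewrite MB_mul submxMl.
Qed.

Lemma wtR0 n : wtR (0 : 'M[L]_n) = 0%N.
Proof.
rewrite wtR_Rs; apply/eqP; rewrite mxrank_eq0 -submx0.
apply: Rs_min => i; rewrite row0 MB0; exact: sub0mx.
Qed.

Lemma wtR_adds p1 p2 n (A : 'M[L]_(p1, n)) (B : 'M[L]_(p2, n)) :
  (wtR (A + B)%MS <= wtR A + wtR B)%N.
Proof.
rewrite !wtR_Rs; apply: leq_trans (mxrank_adds_leqif (Rs A) (Rs B)).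
apply: mxrankS; apply: Rs_min => i.
have [u ->] := sub_addsmxP (row_sub i (A + B)%MS).
rewrite MB_add; apply: addmx_sub_adds; apply: Rs_cover; exact: submxMl.
Qed.
End RS.


Section G.
Variables (K : fieldType) (L : fieldExtType K).

Lemma liftLM a b c (A : 'M[K]_(a, b)) (B : 'M[K]_(b, c)) :
  liftL L (A *m B) = liftL L A *m liftL L B.
Proof. exact: map_mxM. Qed.

Lemma liftLD a b (A B : 'M[K]_(a, b)) : liftL L (A + B) = liftL L A + liftL L B.
Proof. exact: map_mxD. Qed.

Lemma liftL0 a b : liftL L (0 : 'M[K]_(a, b)) = 0.
Proof. exact: map_mx0. Qed.

Lemma wtR_sums (I : finType) (P : pred I) N (F : I -> 'M[L]_N) :
  (wtR (\sum_(i | P i) F i)%MS <= \sum_(i | P i) wtR (F i))%N.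
Proof.
elim/big_rec2: _ => [|i y1 y2 _ IH]; first by rewrite wtR0.
apply: leq_trans (wtR_adds _ _) _; exact: leq_add.
Qed.

Lemma splitG N s (e : 'I_s -> 'M[K]_N) :
  (forall i j, i != j -> e i *m e j = 0) -> (forall i, e i *m e i = e i) ->
  forall D : 'M[L]_N, D *m liftL L (\sum_i e i) = D ->
  exists E : 'I_s -> 'M[L]_N, [/\ forall i, (E i <= D *m liftL L (e i))%MS,
     (\sum_i \rank (E i))%N = \rank D & (\sum_i wtR (E i) <= wtR D)%N].
Proof.
elim: s e => [|s IH] e orth idem D HD.
  exists (fun _ => 0); split=> [i|//|]; first by case: i.
    rewrite big_ord0 -HD big_ord0 liftL0 mulmx0 mxrank0 //.
  by rewrite big_ord0.
pose e0 := e ord0; pose er := fun j => e (lift ord0 j).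
pose g := \sum_j er j.
have e0g : e0 *m g = 0.
  rewrite mulmx_sumr big1 // => j _; apply: orth; exact: neq_lift.
have ge0 : g *m e0 = 0.
  rewrite mulmx_suml big1 // => j _; apply: orth; rewrite eq_sym; exact: neq_lift.
have ger j : g *m er j = er j.
  rewrite mulmx_suml (bigD1 j) //= big1 ?addr0 //; first exact: idem.
  move=> l lj; apply: orth; by rewrite (inj_eq lift_inj).
have gg : g *m g = g.
  rewrite {1}/g mulmx_suml; apply: eq_bigr => j _.
  rewrite mulmx_sumr (bigD1 j) //= big1 ?addr0; first exact: idem.
  move=> l lj; apply: orth; by rewrite eq_sym (inj_eq lift_inj).
have f_eq : \sum_i e i = e0 + g by rewrite big_ord_recl.
pose E0 := (D :&: liftL L e0)%MS.
pose D' := D *m liftL L g.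
have HD' : D' *m liftL L (\sum_j er j) = D'.
  by rewrite /D' -mulmxA -liftLM -/g gg.
have orth' : forall i j : 'I_s, i != j -> er i *m er j = 0.
  by move=> i j ij; apply: orth; rewrite (inj_eq lift_inj).
have [E' [E'sub E'rk E'wt]] := IH er orth' (fun i => idem _) D' HD'.
pose E := fun i : 'I_s.+1 => if unlift ord0 i is Some j then E' j else E0.
have Eo : E ord0 = E0 by rewrite /E unlift_none.
have El j : E (lift ord0 j) = E' j by rewrite /E liftK.
have keq : (D :&: kermx (liftL L g) :=: E0)%MS.
  apply/eqmxP/andP; split.
    set Z := (D :&: _)%MS.
    have ZD : (Z <= D)%MS by exact: capmxSl.
    have Zg : Z *m liftL L g = 0 by apply/sub_kermxP; exact: capmxSr.
    have Zf : Z *m liftL L (\sum_i e i) = Z.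
      by have [W ->] := submxP ZD; rewrite -mulmxA HD.
    rewrite sub_capmx ZD /=; rewrite -Zf f_eq liftLD mulmxDr Zg addr0.
    exact: submxMl.
  rewrite sub_capmx capmxSl /=; apply/sub_kermxP.
  have [U EU] := submxP (capmxSr D (liftL L e0)).
  by rewrite /E0 EU -mulmxA -liftLM e0g liftL0 mulmx0.
exists E; split.
- move=> i; case: (unliftP ord0 i) => [j ->|->]; rewrite ?El ?Eo.
    apply: submx_trans (E'sub j) _; rewrite /D' -mulmxA -liftLM ger.
    exact: submx_refl.
  have [U EU] := submxP (capmxSr D (liftL L e0)).
  have -> : E0 = E0 *m liftL L e0.
    by rewrite /E0 {2}EU -mulmxA -liftLM idem -EU.
  apply: submxMr; exact: capmxSl.
- rewrite big_ord_recl Eo; under eq_bigr do rewrite El.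
  rewrite E'rk -(mxrank_mul_ker D (liftL L g)) addnC keq //.
- rewrite big_ord_recl Eo; under eq_bigr do rewrite El.
  apply: leq_trans (leq_add (leqnn _) E'wt) _.
  rewrite /D' !wtR_Rs (Rs_mul _ _).
  rewrite -(mxrank_mul_ker (Rs D) g) addnC leq_add2l.
  apply: mxrankS; rewrite sub_capmx Rs_mono ?capmxSl //=.
  apply: submx_trans (Rs_sub_lift (capmxSr D (liftL L e0))) _.
  by apply/sub_kermxP.
Qed.
End G.


Section Poly.
Variable F : fieldType.

Lemma horner_trmx N (M : 'M[F]_N.+1) p :
  horner_mx M^T p = (horner_mx M p)^T.
Proof.
elim/poly_ind: p => [|p c IH]; first by rewrite !rmorph0 trmx0.
rewrite !(rmorphD, rmorphM) /= !(horner_mx_X, horner_mx_C) IH.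
rewrite linearD /= tr_scalar_mx trmx_mul; congr (_ + _).
have cm : M *m horner_mx M p = horner_mx M p *m M := comm_mx_horner p (comm_mx_refl M).
by rewrite -!mulmxE -!trmx_mul cm.
Qed.

Lemma horner_invariant N m (A : 'M[F]_N.+1) (C : 'M[F]_(m, N.+1)) q :
  (forall x : 'rV_N.+1, (x <= C)%MS -> (x *m A <= C)%MS) ->
  forall x : 'rV_N.+1, (x <= C)%MS -> (x *m horner_mx A q <= C)%MS.
Proof.
move=> HA; elim/poly_ind: q => [|q c IH] x xC.
  by rewrite rmorph0 mulmx0 sub0mx.
rewrite !(rmorphD, rmorphM) /= !(horner_mx_X, horner_mx_C) mulmxDr mulmxA.
by rewrite addmx_sub ?HA ?IH // mul_mx_scalar scalemx_sub.
Qed.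

Lemma char_poly_trmx n (M : 'M[F]_n) : char_poly M^T = char_poly M.
Proof.
rewrite /char_poly -det_tr; congr (\det _); rewrite /char_poly_mx.
by apply/matrixP => i j; rewrite !mxE eq_sym.
Qed.

Lemma CH_dvd w (B : 'M[F]_w.+1) m :
  horner_mx B m = 0 -> char_poly B %| m ^+ w.+1.
Proof.
move=> Hm.
have [Q HQ] : exists Q, m%:M - map_mx polyC (horner_mx B m) = char_poly_mx B *m Q.
  elim/poly_ind: {Hm} m => [|q c [Q HQ]].
    exists 0; rewrite mulmx0 rmorph0; apply/matrixP => i j; by rewrite !mxE rmorph0 mxE polyC0 subr0.
  exists (Q *m 'X%:M + map_mx polyC (horner_mx B q)).
  rewrite !(rmorphD, rmorphM) /= !(horner_mx_X, horner_mx_C).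
  rewrite map_scalar_mx /= mulmxDr mulmxA -HQ /char_poly_mx.
  have cm : map_mx polyC B *m map_mx polyC (horner_mx B q) =
            map_mx polyC (horner_mx B q) *m map_mx polyC B.
    by rewrite -!map_mxM (comm_mx_horner q (comm_mx_refl B)).
  have xh : 'X%:M *m map_mx polyC (horner_mx B q) =
            map_mx polyC (horner_mx B q) *m 'X%:M by rewrite scalar_mxC.
  rewrite mulmxBl [('X%:M - _) *m _]mulmxBl xh cm !mulmxE.
  by rewrite opprD addrACA subrr addr0 addrA subrK.
move: (congr1 determinant HQ); rewrite Hm map_mx0 subr0 det_scalar det_mulmx.
by move=> ->; apply: dvdp_mulr; rewrite dvdpp.
Qed.
End Poly.


Section Poly2.
Variable F : fieldType.

Lemma char_block_dvd0 a b (A : 'M[F]_(a + b)) (V1 : 'M_(a, a + b)) (V2 : 'M_(b, a + b))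
  (B1 : 'M_a) :
  col_mx V1 V2 \in unitmx -> V1 *m A = B1 *m V1 -> char_poly B1 %| char_poly A.
Proof.
move=> Qu HV; set Q := col_mx V1 V2; set Bf := Q *m A *m invmx Q.
have V1Q : V1 *m invmx Q = row_mx 1%:M 0.
  have := mulmxV Qu; rewrite /Q mul_col_mx (scalar_mx_block a b 1) /block_mx.
  by case/eq_col_mx.
have uBf : usubmx Bf = row_mx B1 0.
  by rewrite /Bf /Q !mul_col_mx col_mxKu HV -mulmxA V1Q mul_mx_row mulmx1 mulmx0.
have Bfe : Bf = block_mx B1 0 (dlsubmx Bf) (drsubmx Bf).
  by rewrite -{1}(submxK Bf) /ulsubmx /ursubmx uBf row_mxKl row_mxKr.
have charBf : char_poly Bf = char_poly B1 * char_poly (drsubmx Bf).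
  rewrite {1}Bfe /char_poly /char_poly_mx map_block_mx (scalar_mx_block a b).
  rewrite opp_block_mx add_block_mx.
  have -> : map_mx (@polyC F) 0 = 0 :> 'M_(a, b) by apply/matrixP => i j; rewrite !mxE.
  by rewrite oppr0 addr0 det_lblock.
have simil : char_poly Bf = char_poly A.
  pose Q' := map_mx (@polyC F) Q.
  have BQ : Bf *m Q = Q *m A by rewrite /Bf mulmxKV.
  have HQ : char_poly_mx Bf *m Q' = Q' *m char_poly_mx A.
    rewrite /char_poly_mx mulmxBl mulmxBr scalar_mxC -map_mxM BQ map_mxM //.
  have := congr1 determinant HQ; rewrite !det_mulmx -/(char_poly Bf) -/(char_poly A).
  rewrite [_ * char_poly A]mulrC; apply: mulIf.
  rewrite det_map_mx polyC_eq0 -unitfE -unitmxE //.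
rewrite -simil charBf; apply: dvdp_mulr; exact: dvdpp.
Qed.

Lemma char_block_dvd a b n (e : (a + b)%N = n) (A : 'M[F]_n) (V1 : 'M_(a, n))
  (V2 : 'M_(b, n)) (B1 : 'M_a) :
  \rank (col_mx V1 V2) = n -> V1 *m A = B1 *m V1 -> char_poly B1 %| char_poly A.
Proof.
case: n / e A V1 V2 => A V1 V2 rk HV.
by apply: (char_block_dvd0 (V2 := V2)) HV; rewrite -row_free_unit; apply/eqP.
Qed.

Lemma char_dvd_stable n (A : 'M[F]_n) (W : 'M_n) :
  stablemx W A -> char_poly (conjmx (row_base W) A) %| char_poly A.
Proof.
move=> SW.
have e : (\rank W + \rank (W^C)%MS)%N = n.
  by rewrite mxrank_compl subnKC // rank_leq_col.
have SV1 : stablemx (row_base W) A by rewrite stablemx_row_base.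
have HV : row_base W *m A = conjmx (row_base W) A *m row_base W.
  by rewrite /conjmx mulmxKpV.
have rk : \rank (col_mx (row_base W) (row_base (W^C)%MS)) = n.
  rewrite -addsmxE (adds_eqmx (eq_row_base _) (eq_row_base _)).
  by apply/eqP; exact: addsmx_compl_full.
apply: (char_block_dvd (V2 := row_base (W^C)%MS) e) HV. exact: rk.
Qed.
End Poly2.

Section Poly3.
Variable F : fieldType.

Lemma irr_coprime (f g : {poly F}) : irreducible_poly f -> irreducible_poly g ->
  f \is monic -> g \is monic -> f != g -> coprimep f g.
Proof.
move=> If Ig mf mg fg; rewrite coprimep_def.
have [d1|df] := irredp_XsubCP If (dvdp_gcdl f g); first by rewrite size_poly_eq1.
have fdg : f %| g by rewrite -(eqp_dvdl _ df) dvdp_gcdr.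
have [f1|fg'] := irredp_XsubCP Ig fdg.
  by move: If.1; rewrite -size_poly_eq1 in f1; rewrite (eqP f1).
by move: fg'; rewrite eqp_monic // (negbTE fg).
Qed.

Lemma coprimep_prod r (I : finType) (P : pred I) (q : I -> {poly F}) :
  (forall i, P i -> coprimep r (q i)) -> coprimep r (\prod_(i | P i) q i).
Proof.
move=> H; elim/big_rec: _ => [|i x Pi cx]; first exact: coprimep1.
by rewrite coprimepMr H.
Qed.

Lemma restr_char_dvd w N (A : 'M[F]_N.+1) (V : 'M_(w, N.+1)) p :
  row_free V -> stablemx V A -> V *m horner_mx A p = 0 ->
  char_poly (conjmx V A) %| p ^+ w.
Proof.
case: w V => [|w] V rf st VH.
  by rewrite /char_poly det_mx00 dvd1p.
apply: CH_dvd; rewrite horner_mx_conj // /conjmx VH mul0mx //.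
Qed.

Lemma dim_ker_bound N (A : 'M[F]_N.+1) s (f : 'I_s -> {poly F}) (mu nu : 'I_s -> nat) :
  (forall i, f i \is monic /\ irreducible_poly (f i)) -> injective f ->
  char_poly A = \prod_(i < s) f i ^+ nu i ->
  forall j, (\rank (kermx (horner_mx A (f j ^+ mu j))) <= nu j * (size (f j)).-1)%N.
Proof.
move=> Hf finj Hch j; set H := horner_mx A _; set W := kermx H.
have SW : stablemx W A := comm_mx_stable_kermxpoly (f j ^+ mu j) (comm_mx_refl A).
have dv1 := char_dvd_stable SW.
set cB := char_poly _ in dv1.
have dv2 : cB %| (f j ^+ mu j) ^+ \rank W.
  apply: restr_char_dvd; first exact: row_base_free.
    by rewrite stablemx_row_base.
  by apply/sub_kermxP; rewrite (eq_row_base W).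
set r := \prod_(i < s | i != j) f i ^+ nu i.
have chE : char_poly A = f j ^+ nu j * r by rewrite Hch (bigD1 j).
have cop : coprimep cB r.
  apply: (coprimep_dvdr dv2); rewrite -exprM; apply: coprimep_expl.
  apply: coprimep_prod => i ij; apply: coprimep_expr.
  have [m1 i1] := Hf j; have [m2 i2] := Hf i.
  by apply: irr_coprime => //; apply: contra ij => /eqP /finj ->.
have dv3 : cB %| f j ^+ nu j by rewrite -(Gauss_dvdpl _ cop) -chE.
have fn0 : f j ^+ nu j != 0 by rewrite expf_neq0 // irredp_neq0 //; case: (Hf j).
have := dvdp_leq fn0 dv3; rewrite /cB size_char_poly.
rewrite mulnC -size_exp; case: (size _) => // k.
Qed.
End Poly3.


Section Idem.
Variable F : fieldType.

Lemma idem_mats N (A : 'M[F]_N.+1) s (p : 'I_s -> {poly F}) :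
  (forall i j, i != j -> coprimep (p i) (p j)) -> horner_mx A (\prod_i p i) = 0 ->
  exists E : 'I_s -> 'M[F]_N.+1,
   [/\ forall j, E j *m horner_mx A (p j) = 0,
       \sum_j E j = 1%:M,
       forall i j, i != j -> E i *m E j = 0,
       forall j, E j *m E j = E j &
       forall j, exists e, E j = horner_mx A e].
Proof.
move=> cp H0.
have cop j : coprimep (p j) (\prod_(l | l != j) p l).
  by apply: coprimep_prod => l lj; apply: cp; rewrite eq_sym.
have [uv Huv] : exists uv : 'I_s -> {poly F} * {poly F},
    forall j, (uv j).1 * p j + (uv j).2 * \prod_(l | l != j) p l = 1.
  have := @fin_all_exists _ (fun _ => ({poly F} * {poly F})%type)
    (fun j uv => uv.1 * p j + uv.2 * \prod_(l | l != j) p l = 1).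
  by apply => j; apply/Bezout_eq1_coprimepP.
pose e j := (uv j).2 * \prod_(l | l != j) p l.
have eu j : e j = 1 - (uv j).1 * p j.
  by rewrite -(Huv j) /e addrC addKr.
have ep j : e j * p j = (uv j).2 * \prod_i p i.
  by rewrite /e -mulrA; congr (_ * _); rewrite [RHS](bigD1 j) //= mulrC.
have el j l : l != j -> exists w, e j = w * p l.
  move=> lj; exists ((uv j).2 * \prod_(i | (i != j) && (i != l)) p i).
  by rewrite /e (bigD1 l) //= -mulrA [p l * _]mulrC.
pose E j := horner_mx A (e j).
have c1 j : E j *m horner_mx A (p j) = 0.
  by rewrite /E mulmxE -rmorphM ep rmorphM /= H0 mulr0.
have c2 j m (x : 'M_(m, N.+1)) : x *m horner_mx A (p j) = 0 -> x *m E j = x.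
  move=> xp; rewrite /E eu rmorphB rmorph1 /= mulrC rmorphM /= -mulmxE.
  by rewrite mulmxBr mulmx1 mulmxA xp mul0mx subr0.
have c3 j l m (x : 'M_(m, N.+1)) : l != j -> x *m horner_mx A (p l) = 0 -> x *m E j = 0.
  move=> lj xp; rewrite /E; have [w ->] := el j l lj.
  by rewrite mulrC rmorphM /= -mulmxE mulmxA xp mul0mx.
have full : (1%:M <= \sum_l kermx (horner_mx A (p l)))%MS.
  have cp' : {in predT &, forall i j : 'I_s, j != i -> coprimep (p i) (p j)}.
    by move=> i j _ _ ji; apply: cp; rewrite eq_sym.
  have := @kermxpoly_prod F N.+1 A _ predT p cp'; rewrite /kermxpoly => <-.
  by rewrite H0 kermx0.
exists E; split => //.
- have [X HX] := sub_sumsmxP full.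
  transitivity ((\sum_l X l *m kermx (horner_mx A (p l))) *m \sum_j E j).
    by rewrite -HX mul1mx.
  rewrite mulmx_suml [RHS]HX; apply: eq_bigr => l _.
  rewrite -mulmxA mulmx_sumr (bigD1 l) //= big1 ?addr0 ?c2 ?mulmx_ker //.
  move=> j jl; have := c3 j l _ (kermx (horner_mx A (p l))); apply; [by rewrite eq_sym | exact: mulmx_ker].
- by move=> i j ij; have := c3 j i _ (E i); apply; [exact: ij | exact: c1].
- by move=> j; apply: c2; exact: c1.
- by move=> j; exists (e j).
Qed.
End Idem.


Section Mr.
Variables (K : fieldType) (L : fieldExtType K).

Lemma exists_sub_rank N (Y : 'M[L]_N) r : (r <= \rank Y)%N ->
  exists D : 'M[L]_N, \rank D = r /\ (D <= Y)%MS.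
Proof.
move=> rY; exists (<<(pid_mx r : 'M[L]_(r, \rank Y)) *m row_base Y>>)%MS; split.
  by rewrite genmxE mxrankMfree ?row_base_free // rank_pid_mx.
by rewrite genmxE; apply: submx_trans (submxMl _ _) _; rewrite eq_row_base.
Qed.

Lemma Mr_spec p N (C : 'M[L]_(p, N)) r : (r <= \rank C)%N ->
  exists D : 'M[L]_N, [/\ \rank D = r, (D <= C)%MS & wtR D = Mr C r].
Proof.
move=> rC.
have ex : exists w, exists D : 'M[L]_N, [/\ \rank D = r, (D <= C)%MS & wtR D = w].
  have rC' : (r <= \rank (genmx C))%N by rewrite genmxE.
  have [D [rD DC]] := exists_sub_rank rC'.
  by exists (wtR D), D; split=> //; rewrite -(genmxE C).
exact: (pmin_spec ex).
Qed.

Lemma Mr_le p N (C : 'M[L]_(p, N)) r (D : 'M[L]_N) :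
  \rank D = r -> (D <= C)%MS -> (Mr C r <= wtR D)%N.
Proof. by move=> rD DC; apply: pmin_le; exists D. Qed.

Lemma Mr0 p N (C : 'M[L]_(p, N)) : Mr C 0 = 0%N.
Proof.
apply/eqP; rewrite -leqn0; apply: leq_trans (Mr_le (D := 0) (mxrank0 _ _ _) (sub0mx _ _)) _.
by rewrite wtR0.
Qed.

Lemma Mr_singleton N (X : 'M[L]_N) r : (r <= \rank X)%N ->
  (Mr X r <= N - \rank X + r)%N.
Proof.
move=> rX; set k := \rank X.
have kN : (k <= N)%N by exact: rank_leq_col.
pose S : 'M[K]_N := pid_mx (N - k + r).
have rS : \rank (liftL L S) = (N - k + r)%N.
  by rewrite mxrank_map rank_pid_mx //; lia.
have rY : (r <= \rank (X :&: liftL L S))%N.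
  have := mxrank_sum_cap X (liftL L S); rewrite rS -/k.
  have := rank_leq_col (X + liftL L S)%MS; lia.
have [D [rD DY]] := exists_sub_rank rY.
apply: leq_trans (Mr_le rD (submx_trans DY (capmxSl _ _))) _.
rewrite wtR_Rs -rS mxrank_map; apply: mxrankS; apply: Rs_sub_lift.
exact: submx_trans DY (capmxSr _ _).
Qed.

Lemma liftL_sum a b (I : finType) (P : pred I) (X : I -> 'M[K]_(a, b)) :
  liftL L (\sum_(i | P i) X i) = \sum_(i | P i) liftL L (X i).
Proof. exact: (big_morph _ (@liftLD K L a b) (@liftL0 K L a b)). Qed.

Lemma liftL1 a : liftL L (1%:M : 'M[K]_a) = 1%:M.
Proof. exact: map_mx1. Qed.

Lemma subdirect (I : finType) (P : pred I) N (X Y : I -> 'M[L]_N) :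
  mxdirect (\sum_(i | P i) X i) -> (forall i, P i -> (Y i <= X i)%MS) ->
  \rank (\sum_(i | P i) Y i)%MS = (\sum_(i | P i) \rank (Y i))%N.
Proof.
move=> /mxdirect_sumsP dX YX; apply/eqP; rewrite -mxdirectE /=.
apply/mxdirect_sumsP => i Pi; apply/eqP; rewrite -submx0.
have S : (\sum_(j | P j && (j != i)) Y j <= \sum_(j | P j && (j != i)) X j)%MS.
  by apply: sumsmxS => j /andP [Pj _]; exact: YX.
by apply: submx_trans (capmxS (YX i Pi) S) _; rewrite dX.
Qed.
End Mr.


Section NatL.
Local Open Scope nat_scope.
Lemma sum_eq1 (I : finType) (P : pred I) (F : I -> nat) :
  \sum_(i | P i) F i = 1 ->
  exists2 i, P i & (F i = 1 /\ forall j, P j -> j != i -> F j = 0).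
Proof.
move=> S.
have [i Pi Fi] : exists2 i, P i & 0 < F i.
  apply/exists_inP; apply: contraT; rewrite negb_exists_in => /forall_inP H.
  by move: S; rewrite big1 // => j Pj; move: (H j Pj); rewrite lt0n negbK => /eqP.
exists i => //.
have S' := S; rewrite (bigD1 i) //= in S'.
split; first by lia.
move=> j Pj ji; move: S'; rewrite (bigD1 j) /=; last by rewrite Pj ji.
lia.
Qed.

Lemma sum_eq_le (I : finType) (P : pred I) (F G : I -> nat) :
  (forall i, P i -> F i <= G i) ->
  \sum_(i | P i) F i = \sum_(i | P i) G i -> forall i, P i -> F i = G i.
Proof.
move=> FG S i Pi; move: S; rewrite (bigD1 i) //= [X in _ = X](bigD1 i) //=.
have : \sum_(j | P j && (j != i)) F j <= \sum_(j | P j && (j != i)) G j.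
  by apply: leq_sum => j /andP [Pj _]; exact: FG.
have := FG i Pi; lia.
Qed.
End NatL.



Theorem theorem3 (K : fieldType) (L : fieldExtType K) (n : nat)
  (Hm : (n.+1 <= \dim (fullv : {vspace L}))%N)
  (M : 'M[K]_n.+1) (s : nat) (f : 'I_s -> {poly K}) (mu nu : 'I_s -> nat)
  (Hf : forall i, f i \is monic /\ irreducible_poly (f i))
  (Hinj : injective f)
  (Hmu : forall i, (0 < mu i)%N) (Hnu : forall i, (0 < nu i)%N)
  (Hmin : mxminpoly M = \prod_(i < s) f i ^+ mu i)
  (Hchar : char_poly M = \prod_(i < s) f i ^+ nu i)
  (d : 'I_s -> nat)
  (Hd : forall i, d i = \rank (kerK (horner_mx M (f i ^+ mu i))))
  (P : forall i, 'M[K]_(d i, n.+1))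
  (HP : forall i, row_free (P i) /\ (P i == kerK (horner_mx M (f i ^+ mu i)))%MS)
  (C : 'M[L]_n.+1) (HC : is_Mcode M C) (Hk : (1 <= \rank C)%N)
  (Ci : forall i, 'M[L]_(d i))
  (HCi : forall i (c : 'rV[L]_(d i)),
     (c <= Ci i)%MS <->
     (c *m liftL L (P i) <= (C :&: kerL L (horner_mx M (f i ^+ mu i))))%MS) :
  let k := \rank C in
  let Cap := fun i => (C :&: kerL L (horner_mx M (f i ^+ mu i)))%MS in
  let ki := fun i => \rank (Cap i) in
  let Lam := [set i | ~~ (Cap i == (0 : 'M[L]_n.+1))%MS] in
  let D := fun i => (nu i * (size (f i)).-1)%N in
  [/\ forall r, (1 <= r <= k)%N ->
        Mr C r = minsplit Lam ki r (fun i ri => Mr (Ci i) ri) /\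
        Mr C r = minsplit Lam ki r (fun i ri => Mr (Cap i) ri),
      forall i, i \in Lam -> forall ri, (1 <= ri <= ki i)%N ->
        Mr (Ci i) ri = Mr (Cap i) ri /\ (Mr (Cap i) ri <= D i - ki i + ri)%N,
      forall r, (1 <= r <= k)%N ->
        (Mr C r <= minsplit Lam ki r
                     (fun i ri => if ri != 0%N then D i - ki i else 0%N) + r)%N,
      Mr C 1 = minidx Lam (fun i => Mr (Ci i) 1) /\
        (Mr C 1 <= minidx Lam (fun i => D i - ki i) + 1)%N &
      Mr C k = (\sum_(i in Lam) Mr (Ci i) (ki i))%N /\
        (Mr C k <= \sum_(i in Lam) D i)%N].
Proof.
move=> k Cap ki Lam D.
pose A := M^T.
pose p := fun i => f i ^+ mu i.
have hAp i : horner_mx A (p i) = (horner_mx M (p i))^T := horner_trmx M (p i).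
have cpp : forall i j, i != j -> coprimep (p i) (p j).
  move=> i j ij; apply: coprimep_expl; apply: coprimep_expr.
  have [m1 i1] := Hf i; have [m2 i2] := Hf j.
  by apply: irr_coprime => //; apply: contra ij => /eqP /Hinj ->.
have H0 : horner_mx A (\prod_i p i) = 0.
  by rewrite /A horner_trmx -Hmin mx_root_minpoly trmx0.
have [E [E1 Esum Eorth Eidem Epoly]] := idem_mats cpp H0.
pose V i := kermxpoly (liftL L A) (map_poly (in_alg L) (p i)).
have Vdef i : V i = kermx (liftL L (horner_mx A (p i))).
  by rewrite /V /kermxpoly /liftL map_horner_mx.
have capE i : Cap i = (C :&: V i)%MS.
  by rewrite /Cap /kerL Vdef hAp map_trmx.
have inv : forall m (X : 'M[L]_(m, n.+1)) j, (X <= C)%MS -> (X *m liftL L (E j) <= C)%MS.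
  move=> m X j XC; have [e ->] := Epoly j.
  rewrite /liftL map_horner_mx /A -map_trmx.
  apply/row_subP => i; rewrite row_mul; apply: horner_invariant.
    by move=> x xC; apply: HC.
  exact: submx_trans (row_sub i X) XC.
have toV : forall m (X : 'M[L]_(m, n.+1)) j, (X *m liftL L (E j) <= V j)%MS.
  by move=> m X j; rewrite Vdef; apply/sub_kermxP; rewrite -mulmxA -liftLM E1 liftL0 mulmx0.
have toCap : forall m (X : 'M[L]_(m, n.+1)) j, (X <= C)%MS -> (X *m liftL L (E j) <= Cap j)%MS.
  by move=> m X j XC; rewrite capE sub_capmx inv ?toV.
have dirV : forall Q : pred 'I_s, mxdirect (\sum_(i | Q i) V i).
  move=> Q; apply: mxdirect_sum_kermx => i j _ _ ji.
  by rewrite coprimep_map; apply: cpp; rewrite eq_sym.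
have CapV i : (Cap i <= V i)%MS by rewrite capE capmxSr.
have CapC i : (Cap i <= C)%MS by rewrite capE capmxSl.
have notLam i : i \notin Lam -> Cap i = 0.
  by rewrite inE negbK => /andP [h _]; exact: submx0null h.
have inLam i : i \in Lam -> (0 < ki i)%N.
  rewrite inE lt0n; apply: contra => /eqP h.
  by move: h; rewrite /ki => /eqP; rewrite mxrank_eq0 => /eqP ->; rewrite /eqmx sub0mx.
have Cdec : (C :=: \sum_i Cap i)%MS.
  apply/eqmxP/andP; split.
    rewrite {1}(_ : C = \sum_j (C *m liftL L (E j))); last first.
      by rewrite -mulmx_sumr -liftL_sum Esum liftL1 mulmx1.
    apply: summx_sub => j _; apply: submx_trans (toCap _ _ j (submx_refl C)) _.
    exact: (sumsmx_sup j).
  by apply/sumsmx_subP => i _; exact: CapC.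
have rkC : k = (\sum_(i in Lam) ki i)%N.
  rewrite /k Cdec (subdirect (X := V) (dirV predT)) => [|i _]; last exact: CapV.
  rewrite (bigID (mem Lam)) /= addnC big1 ?add0n // => i iL.
  by rewrite /ki notLam ?mxrank0.
have rfPL i : row_free (liftL L (P i)).
  by rewrite /row_free mxrank_map; exact: (HP i).1.
have CapPL i : (Cap i <= liftL L (P i))%MS.
  apply: submx_trans (CapV i) _; rewrite Vdef -map_kermx map_submx hAp.
  by have /andP [_ ->] := (HP i).2.
have CiP i : (Ci i *m liftL L (P i) :=: Cap i)%MS.
  apply/eqmxP/andP; split.
    apply/row_subP => j; rewrite row_mul; apply/(HCi i); exact: row_sub.
  rewrite -(mulmxKpV (CapPL i)); apply: submxMr; apply/row_subP => j.
  by apply/(HCi i); rewrite -row_mul mulmxKpV ?CapPL // row_sub.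
have rkCi i : \rank (Ci i) = ki i.
  by rewrite /ki -(CiP i) (mxrankMfree _ (rfPL i)).
have MrCi : forall i ri, Mr (Ci i) ri = Mr (Cap i) ri.
  move=> i ri; pose PL := liftL L (P i).
  have rfPL' : row_free PL := rfPL i.
  have CapPL' : (Cap i <= PL)%MS := CapPL i.
  have CiP' : (Ci i *m PL :=: Cap i)%MS := CiP i.
  clear -rfPL' CapPL' CiP' HCi HP.
  move: rfPL' CapPL' CiP' => rfPL CapPL CiP.
  apply: pmin_ext => w; split.
    case=> X [rX XC wX]; exists (<<X *m PL>>%MS); split.
    - by rewrite genmxE (mxrankMfree _ rfPL).
    - by rewrite genmxE -CiP submxMr.
    - by rewrite (wtR_eqmx (genmxE _)) wtR_Rs (Rs_mul _ _) mxrankMfree ?(HP i).1 // -wtR_Rs.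
  case=> Y [rY YC wY].
  have YPL : (Y <= PL)%MS := submx_trans YC CapPL.
  pose X := Y *m pinvmx PL.
  have XPL : X *m PL = Y by rewrite mulmxKpV.
  exists (<<X>>%MS); split.
  - by rewrite genmxE -rY -XPL (mxrankMfree _ rfPL).
  - rewrite genmxE; apply/row_subP => j; apply/(HCi i).
    by rewrite -row_mul XPL; apply: submx_trans (row_sub j Y) YC.
  - rewrite (wtR_eqmx (genmxE _)) -wY -XPL !wtR_Rs (Rs_mul _ _) mxrankMfree //.
    exact: (HP i).1.
have dD i : (d i <= D i)%N.
  rewrite Hd /kerK -hAp /D.
  have ch : char_poly A = \prod_(i < s) f i ^+ nu i by rewrite /A char_poly_trmx.
  exact: (@dim_ker_bound K n A s f mu nu Hf Hinj ch i).
have sing i ri : (ri <= ki i)%N -> (Mr (Cap i) ri <= d i - ki i + ri)%N.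
  by move=> rk; rewrite -MrCi -rkCi; apply: Mr_singleton; rewrite rkCi.
have splitA : forall r, (r <= k)%N -> exists rr : 'I_s -> nat,
    [/\ forall i, i \in Lam -> (rr i <= ki i)%N, (\sum_(i in Lam) rr i)%N = r &
        (\sum_(i in Lam) Mr (Cap i) (rr i) <= Mr C r)%N].
  move=> r rk; have [D0 [rD DC wD]] := Mr_spec (C := C) rk.
  have HD : D0 *m liftL L (\sum_i E i) = D0 by rewrite Esum liftL1 mulmx1.
  have [Ei [Esub Erk Ewt]] := splitG Eorth Eidem HD.
  have Esub' i : (Ei i <= Cap i)%MS := submx_trans (Esub i) (toCap _ _ i DC).
  exists (fun i => \rank (Ei i)); split.
  - by move=> i _; rewrite /ki; apply: mxrankS.
  - rewrite -rD -Erk [RHS](bigID (mem Lam)) /= [X in _ = _ + X]big1; first exact: (esym (addn0 _)).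
    by move=> i iL; have := Esub' i; rewrite notLam // => /submx0null ->; rewrite mxrank0.
  - rewrite -wD; apply: leq_trans _ Ewt.
    apply: (@leq_trans (\sum_(i in Lam) wtR (Ei i))).
      by apply: leq_sum => i _; exact: Mr_le (erefl _) (Esub' i).
    by rewrite [X in (_ <= X)%N](bigID (mem Lam)) /= leq_addr.
have MrC : forall r, (r <= k)%N -> Mr C r = minsplit Lam ki r (fun i ri => Mr (Cap i) ri).
  move=> r rk; have [rr [rr1 rr2 rr3]] := splitA r rk.
  apply/eqP; rewrite eqn_leq; apply/andP; split; last first.
    by apply: leq_trans _ rr3; apply: pmin_le; exists rr; split.
  rewrite /minsplit.
  set Q0 := (fun w => _).
  have ex : exists w, Q0 w by exists (\sum_(i in Lam) Mr (Cap i) (rr i))%N, rr; split.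
  have [rs [rs1 rs2 ->]] := pmin_spec ex.
  have [Ds HDs] : exists Ds : 'I_s -> 'M[L]_n.+1, forall i, i \in Lam ->
      [/\ \rank (Ds i) = rs i, (Ds i <= Cap i)%MS & wtR (Ds i) = Mr (Cap i) (rs i)].
    apply: (@fin_all_exists _ (fun _ => 'M[L]_n.+1)
      (fun i Dx => i \in Lam -> [/\ \rank Dx = rs i, (Dx <= Cap i)%MS & wtR Dx = Mr (Cap i) (rs i)])) => i.
    case: (boolP (i \in Lam)) => iL; last by exists 0.
    by have [X HX] := Mr_spec (C := Cap i) (rs1 i iL); exists X.
  pose DD := (\sum_(i in Lam) Ds i)%MS.
  apply: leq_trans (Mr_le (D := DD) _ _) _.
  - rewrite /DD (subdirect (X := V) (dirV (fun i => i \in Lam))); last first.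
      by move=> i iL; have [_ h _] := HDs i iL; apply: submx_trans h (CapV i).
    by rewrite -rs2; apply: eq_bigr => i iL; have [-> _ _] := HDs i iL.
  - by apply/sumsmx_subP => i iL; have [_ h _] := HDs i iL; apply: submx_trans h (CapC i).
  - apply: leq_trans (wtR_sums _ _) _; rewrite leq_eqVlt; apply/orP; left; apply/eqP.
    by apply: eq_bigr => i iL; have [_ _ ->] := HDs i iL.
have Ci_eq : forall r, minsplit Lam ki r (fun i ri => Mr (Ci i) ri) =
                      minsplit Lam ki r (fun i ri => Mr (Cap i) ri).
  move=> r; congr minsplit; apply: funext => i; apply: funext => ri; exact: MrCi.
have part2 : forall i, i \in Lam -> forall ri, (1 <= ri <= ki i)%N ->
    Mr (Ci i) ri = Mr (Cap i) ri /\ (Mr (Cap i) ri <= D i - ki i + ri)%N.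
  move=> i iL ri /andP [_ rk]; split; first exact: MrCi.
  apply: leq_trans (sing i ri rk) _; rewrite leq_add2r; apply: leq_sub2r; exact: dD.
have [i0 i0L] : exists i0, i0 \in Lam.
  case: (pickP (mem Lam)) => [i0 i0L|none]; first by exists i0.
  by move: Hk; rewrite -/k rkC big_pred0.
split.
- by move=> r /andP [_ rk]; rewrite Ci_eq MrC.
- exact: part2.
- move=> r /andP [_ rk].
  have [rr [rr1 rr2 _]] := splitA r rk.
  rewrite /minsplit; set Q1 := (fun w => _).
  have ex : exists w, Q1 w.
    by exists (\sum_(i in Lam) (if rr i != 0%N then D i - ki i else 0%N))%N, rr; split.
  have [rs [rs1 rs2 ->]] := pmin_spec ex.
  apply: (@leq_trans (\sum_(i in Lam) Mr (Cap i) (rs i))).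
    by rewrite MrC //; apply: pmin_le; exists rs; split.
  rewrite -rs2 -big_split /=; apply: leq_sum => i iL.
  case: (eqVneq (rs i) 0%N) => [->|nz] /=; first by rewrite Mr0.
  have h : (1 <= rs i <= ki i)%N by rewrite lt0n nz rs1.
  exact: (part2 i iL (rs i) h).2.
- have minidx_eq : minsplit Lam ki 1 (fun i ri => Mr (Ci i) ri) =
                   minidx Lam (fun i => Mr (Ci i) 1).
    have exi : exists w, exists2 i, i \in Lam & w = Mr (Ci i) 1.
      by exists (Mr (Ci i0) 1), i0.
    rewrite /minidx; have [[i2 i2L e2] mmin] := pminP exi.
    pose rr := fun i => (i == i2) : nat.
    have rrOK : [/\ forall i, i \in Lam -> (rr i <= ki i)%N,
        (\sum_(i in Lam) rr i)%N = 1%N &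
        Mr (Ci i2) 1 = (\sum_(i in Lam) Mr (Ci i) (rr i))%N].
      split.
      - move=> i iL; rewrite /rr; case: eqP => // _; exact: inLam.
      - rewrite (bigD1 i2) //= big1 /rr ?eqxx ?addn0 // => i /andP [_ /negPf ->] //.
      - rewrite (bigD1 i2) //= big1 /rr ?eqxx ?addn0 // => i /andP [_ /negPf ->] /=.
        exact: Mr0.
    apply/eqP; rewrite eqn_leq; apply/andP; split.
      by rewrite e2; apply: pmin_le; exists rr.
    have ex : exists w, exists rr : 'I_s -> nat,
        [/\ forall i, i \in Lam -> (rr i <= ki i)%N,
            (\sum_(i in Lam) rr i)%N = 1%N &
            w = (\sum_(i in Lam) Mr (Ci i) (rr i))%N].
      by exists (Mr (Ci i2) 1), rr.
    rewrite /minsplit; have [rs [rs1 rs2 ->]] := pmin_spec ex.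
    have [i3 i3L [r3 r3o]] := sum_eq1 rs2.
    apply: (@leq_trans (Mr (Ci i3) 1)); first by apply: mmin; exists i3.
    rewrite (bigD1 i3) //= r3 big1 ?addn0 // => j /andP [jL ji].
    by rewrite r3o // Mr0.
  have MrC1 : Mr C 1 = minidx Lam (fun i => Mr (Ci i) 1).
    by rewrite -minidx_eq Ci_eq MrC.
  split=> //.
  have exi : exists w, exists2 i, i \in Lam & w = (D i - ki i)%N.
    by exists (D i0 - ki i0)%N, i0.
  rewrite /minidx; have [i1 i1L ->] := pmin_spec exi.
  rewrite MrC1; apply: (@leq_trans (Mr (Ci i1) 1)); first by apply: pmin_le; exists i1.
  have [-> h] := part2 i1 i1L 1 (inLam i1 i1L); exact: h.
- have kk : (k <= k)%N by [].
  have eqk : minsplit Lam ki k (fun i ri => Mr (Ci i) ri) =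
             (\sum_(i in Lam) Mr (Ci i) (ki i))%N.
    apply/eqP; rewrite eqn_leq; apply/andP; split.
      by apply: pmin_le; exists ki; split => //; rewrite rkC.
    have ex : exists w, exists rr : 'I_s -> nat,
        [/\ forall i, i \in Lam -> (rr i <= ki i)%N,
            (\sum_(i in Lam) rr i)%N = k &
            w = (\sum_(i in Lam) Mr (Ci i) (rr i))%N].
      by exists (\sum_(i in Lam) Mr (Ci i) (ki i))%N, ki; split => //; rewrite rkC.
    rewrite /minsplit; have [rs [rs1 rs2 ->]] := pmin_spec ex.
    have rsE := sum_eq_le rs1 (etrans rs2 rkC).
    by rewrite leq_eqVlt; apply/orP; left; apply/eqP; apply: eq_bigr => i iL; rewrite rsE.
  have MrCk : Mr C k = (\sum_(i in Lam) Mr (Ci i) (ki i))%N by rewrite -eqk Ci_eq MrC.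
  split=> //; rewrite MrCk; apply: leq_sum => i iL.
  rewrite MrCi; apply: leq_trans (sing i (ki i) (leqnn _)) _.
  have kd : (ki i <= d i)%N by rewrite -rkCi rank_leq_col.
  by rewrite subnK //; exact: dD.
Qed.
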